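(* Let $b\in\mathbb{R}$ and let $(r,W,V,N,\delta)$ be a smooth solution, defined on an interval $(-\infty,\rho_* )$ with $r>0$ and $N>0$ there, of the system \[ \dot r = rN,\quad \dot W = V,\quad \dot V = (2N-\kappa)V - W(1-W^2),\quad \dot N = (\kappa-N)N - \frac{2V^2}{r^2},\quad \big(e^{-\delta}N\big)^{\cdot} = (\kappa-N)e^{-\delta}N, \] where $\dot{}=d/d\rho$ and \[ \kappa=\frac{1}{2N}\left(1+N^2+\frac{2V^2}{r^2}-\frac{(1-W^2)^2}{r^2}\right), \] which is regular at the origin with parameter $b$, i.e. as $\rho\to-\infty$, \[ r\sim e^{\rho},\quad W\sim -1+be^{2\rho},\quad V\sim 2be^{2\rho},\quad N\sim 1-2b^2e^{2\rho},\quad \delta\sim -4b^2e^{2\rho}, \] (these being the leading terms of the asymptotic expansion of the unique local solution determined by $b$, which correspond to $W=-1+br^2+O(r^4)$, $A=N^2=1-4b^2r^2+O(r^4)$, $\delta=-4b^2r^2+O(r^4)$ in the areal radius $r$). Then for all $\rho\in(-\infty,\rho_* )$, \[ 1\le \kappa(\rho)\le 2-N(\rho). \]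
   Context: This system is the static spherically symmetric Einstein–Yang–Mills system with gauge group $SU(2)$, for the metric $ds^2=-e^{-2\delta}N^2dt^2+r^2(d\rho^2+d\Omega^2)$ (with $d\Omega^2$ the round metric on the unit 2-sphere) and Yang–Mills potential $W$; the radial coordinate $\rho$ is related to the areal radius $r$ by $dr=rN\,d\rho$, and $N=\sqrt{A}$ where $A$ is the metric function in $ds^2=-e^{-2\delta}A\,dt^2+dr^2/A+r^2d\Omega^2$. *)

(* Defs.v *)
From Stdlib Require Import Reals.
From Coquelicot Require Import Coquelicot.
Open Scope R_scope.

Definition kappa (r W V N : R) : R :=
  / (2 * N) * (1 + N ^ 2 + 2 * V ^ 2 / r ^ 2 - (1 - W ^ 2) ^ 2 / r ^ 2).

Definition little_o_e2 (f : R -> R) : Prop :=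
  is_lim (fun x => f x / exp (2 * x)) m_infty 0.

Definition regular_at_origin (b : R) (r W V N delta : R -> R) : Prop :=
  is_lim (fun x => r x / exp x) m_infty 1 /\
  little_o_e2 (fun x => W x - (-1 + b * exp (2 * x))) /\
  little_o_e2 (fun x => V x - 2 * b * exp (2 * x)) /\
  little_o_e2 (fun x => N x - (1 - 2 * b ^ 2 * exp (2 * x))) /\
  little_o_e2 (fun x => delta x - (- 4 * b ^ 2 * exp (2 * x))).

Definition eym_solution (rho_s : Rbar) (r W V N delta : R -> R) : Prop :=
  forall x : R, Rbar_lt x rho_s ->
    (forall n : nat, ex_derive_n r n x /\ ex_derive_n W n x /\ ex_derive_n V n x
                     /\ ex_derive_n N n x /\ ex_derive_n delta n x) /\
    0 < r x /\ 0 < N x /\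
    let k := kappa (r x) (W x) (V x) (N x) in
    is_derive r x (r x * N x) /\
    is_derive W x (V x) /\
    is_derive V x ((2 * N x - k) * V x - W x * (1 - W x ^ 2)) /\
    is_derive N x ((k - N x) * N x - 2 * V x ^ 2 / r x ^ 2) /\
    is_derive (fun y => exp (- delta y) * N y) x ((k - N x) * (exp (- delta x) * N x)).

(* Main.v *)
Require Import Defs.
From Stdlib Require Import Reals Lra.
From Coquelicot Require Import Coquelicot.
Open Scope R_scope.
Lemma deriv_Phi (r W V N M : R -> R) y :
  r y <> 0 -> N y <> 0 ->
  let k := kappa (r y) (W y) (V y) (N y) in
  is_derive r y (r y * N y) ->
  is_derive W y (V y) ->
  is_derive V y ((2 * N y - k) * V y - W y * (1 - W y ^ 2)) ->
  is_derive N y ((k - N y) * N y - 2 * V y ^ 2 / r y ^ 2) ->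
  is_derive M y ((k - N y) * M y) ->
  is_derive (fun t => (kappa (r t) (W t) (V t) (N t) - 1) * (exp t * r t * M t)) y
     (2 * exp y * M y * V y ^ 2 / r y).
Proof.
  intros Hr HN k Dr DW DV DN DM. unfold k in *. unfold kappa in *.
  auto_derive.
  - repeat split; try (eexists; eassumption); auto.
  - replace (Derive (fun x => r x) y) with (r y * N y) by (symmetry; now apply is_derive_unique).
    replace (Derive (fun x => W x) y) with (V y) by (symmetry; now apply is_derive_unique).
    replace (Derive (fun x => V x) y) with ((2 * N y - / (2 * N y) *
        (1 + N y ^ 2 + 2 * V y ^ 2 / r y ^ 2 - (1 - W y ^ 2) ^ 2 / r y ^ 2)) * V y - W y * (1 - W y ^ 2)) by (symmetry; now apply is_derive_unique).
    replace (Derive (fun x => N x) y) with ((/ (2 * N y) *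
        (1 + N y ^ 2 + 2 * V y ^ 2 / r y ^ 2 - (1 - W y ^ 2) ^ 2 / r y ^ 2) - N y) * N y - 2 * V y ^ 2 / r y ^ 2) by (symmetry; now apply is_derive_unique).
    replace (Derive (fun x => M x) y) with ((/ (2 * N y) *
        (1 + N y ^ 2 + 2 * V y ^ 2 / r y ^ 2 - (1 - W y ^ 2) ^ 2 / r y ^ 2) - N y) * M y) by (symmetry; now apply is_derive_unique).
    field. split; auto.
Qed.

Lemma deriv_Psi (r W V N M : R -> R) y :
  r y <> 0 -> N y <> 0 ->
  let k := kappa (r y) (W y) (V y) (N y) in
  is_derive r y (r y * N y) ->
  is_derive W y (V y) ->
  is_derive V y ((2 * N y - k) * V y - W y * (1 - W y ^ 2)) ->
  is_derive N y ((k - N y) * N y - 2 * V y ^ 2 / r y ^ 2) ->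
  is_derive M y ((k - N y) * M y) ->
  is_derive (fun t => (2 - N t - kappa (r t) (W t) (V t) (N t)) * (exp (2 * t) * M t / r t)) y
     (3 * (1 - N y) ^ 2 * (exp (2 * y) * M y / r y)).
Proof.
  intros Hr HN k Dr DW DV DN DM. unfold k in *. unfold kappa in *.
  auto_derive.
  - repeat split; try (eexists; eassumption); auto.
  - replace (Derive (fun x => r x) y) with (r y * N y) by (symmetry; now apply is_derive_unique).
    replace (Derive (fun x => W x) y) with (V y) by (symmetry; now apply is_derive_unique).
    replace (Derive (fun x => V x) y) with ((2 * N y - / (2 * N y) *
        (1 + N y ^ 2 + 2 * V y ^ 2 / r y ^ 2 - (1 - W y ^ 2) ^ 2 / r y ^ 2)) * V y - W y * (1 - W y ^ 2)) by (symmetry; now apply is_derive_unique).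
    replace (Derive (fun x => N x) y) with ((/ (2 * N y) *
        (1 + N y ^ 2 + 2 * V y ^ 2 / r y ^ 2 - (1 - W y ^ 2) ^ 2 / r y ^ 2) - N y) * N y - 2 * V y ^ 2 / r y ^ 2) by (symmetry; now apply is_derive_unique).
    replace (Derive (fun x => M x) y) with ((/ (2 * N y) *
        (1 + N y ^ 2 + 2 * V y ^ 2 / r y ^ 2 - (1 - W y ^ 2) ^ 2 / r y ^ 2) - N y) * M y) by (symmetry; now apply is_derive_unique).
    field. split; auto.
Qed.
Lemma nonneg_of_mono (F dF : R -> R) x0 :
  (forall y, y <= x0 -> is_derive F y (dF y)) ->
  (forall y, y <= x0 -> 0 <= dF y) ->
  is_lim F m_infty 0 -> 0 <= F x0.
Proof.
  intros HD Hpos Hl.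
  destruct (Rle_or_lt 0 (F x0)) as [h|h]; [exact h|exfalso].
  apply is_lim_spec in Hl. simpl in Hl.
  destruct (Hl (mkposreal (- F x0) ltac:(lra))) as [M HM]. simpl in HM.
  set (t := Rmin (M - 1) (x0 - 1)).
  assert (Ht1 : t < M) by (unfold t; generalize (Rmin_l (M-1) (x0-1)); lra).
  assert (Ht2 : t < x0) by (unfold t; generalize (Rmin_r (M-1) (x0-1)); lra).
  specialize (HM t Ht1). rewrite Rminus_0_r in HM.
  destruct (MVT_gen F t x0 dF) as [c [Hc Heq]].
  - intros z Hz. apply HD. rewrite Rmax_right in Hz; lra.
  - intros z Hz. apply continuity_pt_filterlim. apply (@ex_derive_continuous R_AbsRing R_NormedModule F z).
    exists (dF z). apply HD. rewrite Rmax_right in Hz; lra.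
  - rewrite Rmin_left in Hc by lra. rewrite Rmax_right in Hc by lra.
    assert (0 <= dF c) by (apply Hpos; lra).
    assert (0 <= dF c * (x0 - t)) by (apply Rmult_le_pos; lra).
    apply Rabs_def2 in HM. lra.
Qed.

Lemma L_eq (f : R -> R) (a b : R) : is_lim f m_infty a -> a = b -> is_lim f m_infty b.
Proof. intros H ->; exact H. Qed.
Lemma L_mult f g (a b : R) : is_lim f m_infty a -> is_lim g m_infty b ->
  is_lim (fun y => f y * g y) m_infty (a * b).
Proof. intros. apply (is_lim_mult f g m_infty a b); auto. exact I. Qed.
Lemma L_plus f g (a b : R) : is_lim f m_infty a -> is_lim g m_infty b ->
  is_lim (fun y => f y + g y) m_infty (a + b).
Proof. intros. eapply (is_lim_plus f g m_infty a b); eauto. reflexivity. Qed.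
Lemma L_minus f g (a b : R) : is_lim f m_infty a -> is_lim g m_infty b ->
  is_lim (fun y => f y - g y) m_infty (a - b).
Proof. intros. eapply (is_lim_minus f g m_infty a b); eauto. reflexivity. Qed.
Lemma L_inv f (a : R) : is_lim f m_infty a -> a <> 0 ->
  is_lim (fun y => / f y) m_infty (/ a).
Proof. intros H Ha. apply (is_lim_inv f m_infty a); auto. congruence. Qed.
Lemma L_const (a : R) : is_lim (fun _ => a) m_infty a.
Proof. apply is_lim_const. Qed.
Lemma L_exp f (a : R) : is_lim f m_infty a -> is_lim (fun y => exp (f y)) m_infty (exp a).
Proof.
  intros H. unfold is_lim in *. eapply filterlim_comp; [exact H|].
  simpl. apply (@ex_derive_continuous R_AbsRing R_NormedModule exp a). auto_derive. trivial.
Qed.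
Lemma L_ext_loc f g (x0 : R) (a : R) : (forall y, y < x0 -> f y = g y) ->
  is_lim f m_infty a -> is_lim g m_infty a.
Proof. intros H. apply is_lim_ext_loc. exists x0. exact H. Qed.
Lemma L_ext f g (a : R) : (forall y, f y = g y) ->
  is_lim f m_infty a -> is_lim g m_infty a.
Proof. intros H. apply is_lim_ext. exact H. Qed.
Lemma L_exp0 : is_lim (fun y => exp y) m_infty 0.
Proof. exact is_lim_exp_m. Qed.
Lemma L_exp2 : is_lim (fun y => exp (2*y)) m_infty 0.
Proof.
  apply (L_ext (fun y => exp y * exp y)).
  - intros y. rewrite <- exp_plus. f_equal; ring.
  - apply (L_eq _ (0*0)); [apply L_mult; apply L_exp0| ring].
Qed.

Lemma L_opp f (a : R) : is_lim f m_infty a -> is_lim (fun y => - f y) m_infty (- a).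
Proof. intros H. apply (is_lim_opp f m_infty a H). Qed.

Lemma exp2 y : exp (2 * y) = exp y * exp y.
Proof. rewrite <- exp_plus. f_equal; ring. Qed.

Ltac lim_tac := repeat (first [ apply L_exp0 | apply L_exp2 | apply L_const | eassumption
  | apply L_mult | apply L_minus | apply L_plus | apply L_opp | apply L_inv | apply L_exp | lra ]).

Lemma Rbar_lt_le (x0 y : R) (s : Rbar) : Rbar_lt x0 s -> y <= x0 -> Rbar_lt y s.
Proof. destruct s; simpl; auto; lra. Qed.

Theorem lemma1 (b : R) (rho_s : Rbar) (r W V N delta : R -> R) :
  eym_solution rho_s r W V N delta ->
  regular_at_origin b r W V N delta ->
  forall x : R, Rbar_lt x rho_s ->
    1 <= kappa (r x) (W x) (V x) (N x) <= 2 - N x.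
Proof.
  intros Hsol Hreg x0 Hx0.
  destruct Hreg as [Hra [HoW [HoV [HoN Hod]]]]. unfold little_o_e2 in *.
  set (M := fun y => exp (- delta y) * N y).
  assert (Hpt : forall y, y <= x0 -> 0 < r y /\ 0 < N y /\
    let k := kappa (r y) (W y) (V y) (N y) in
    is_derive r y (r y * N y) /\
    is_derive W y (V y) /\
    is_derive V y ((2 * N y - k) * V y - W y * (1 - W y ^ 2)) /\
    is_derive N y ((k - N y) * N y - 2 * V y ^ 2 / r y ^ 2) /\
    is_derive M y ((k - N y) * M y)).
  { intros y Hy. destruct (Hsol y (Rbar_lt_le x0 y rho_s Hx0 Hy)) as [_ H]. exact H. }
  assert (Hrpos : forall y, y < x0 -> r y <> 0).
  { intros y Hy. destruct (Hpt y ltac:(lra)) as [H _]. lra. }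
  assert (HNpos : forall y, y < x0 -> N y <> 0).
  { intros y Hy. destruct (Hpt y ltac:(lra)) as [_ [H _]]. lra. }
  assert (lW : is_lim W m_infty (-1)).
  { apply (L_ext (fun y => ((W y - (-1 + b * exp (2 * y))) / exp (2 * y) + b) * exp (2 * y) - 1)).
    { intros y. field. apply Rgt_not_eq, exp_pos. }
    eapply L_eq; [lim_tac | ring]. }
  assert (lN : is_lim N m_infty 1).
  { apply (L_ext (fun y => ((N y - (1 - 2 * b ^ 2 * exp (2 * y))) / exp (2 * y) - 2 * b ^ 2) * exp (2 * y) + 1)).
    { intros y. field. apply Rgt_not_eq, exp_pos. }
    eapply L_eq; [lim_tac | ring]. }
  assert (ld : is_lim (fun y => - delta y) m_infty 0).
  { apply (L_ext (fun y => - (((delta y - (- 4 * b ^ 2 * exp (2 * y))) / exp (2 * y) - 4 * b ^ 2) * exp (2 * y)))).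
    { intros y. field. apply Rgt_not_eq, exp_pos. }
    eapply L_eq; [lim_tac | ring]. }
  assert (lM : is_lim M m_infty 1).
  { unfold M. eapply L_eq; [lim_tac | rewrite exp_0; ring]. }
  assert (lP : is_lim (fun y => V y / r y) m_infty 0).
  { apply (L_ext_loc (fun y => ((V y - 2 * b * exp (2 * y)) / exp (2 * y) + 2 * b) * exp y * / (r y / exp y)) _ x0).
    { intros y Hy. rewrite exp2. field; repeat split; try (apply Rgt_not_eq, exp_pos); auto. }
    eapply L_eq; [lim_tac | field]. }
  assert (lU : is_lim (fun y => (1 - W y ^ 2) / r y) m_infty 0).
  { apply (L_ext_loc (fun y => (1 - W y) * ((W y - (-1 + b * exp (2 * y))) / exp (2 * y) + b) * exp y * / (r y / exp y)) _ x0).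
    { intros y Hy. rewrite exp2. field; repeat split; try (apply Rgt_not_eq, exp_pos); auto. }
    eapply L_eq; [lim_tac | field]. }
  assert (lk : is_lim (fun y => kappa (r y) (W y) (V y) (N y)) m_infty 1).
  { apply (L_ext_loc (fun y => / (2 * N y) * (1 + N y * N y + 2 * ((V y / r y) * (V y / r y))
         - ((1 - W y ^ 2) / r y) * ((1 - W y ^ 2) / r y))) _ x0).
    { intros y Hy. unfold kappa. field. split; auto. }
    eapply L_eq; [lim_tac | field]. }
  split.
  - assert (H := nonneg_of_mono
      (fun t => (kappa (r t) (W t) (V t) (N t) - 1) * (exp t * r t * M t))
      (fun y => 2 * exp y * M y * V y ^ 2 / r y) x0).
    destruct (Hpt x0 ltac:(lra)) as [Hr0 [HN0 _]].
    assert (0 < M x0) by (unfold M; apply Rmult_lt_0_compat; [apply exp_pos|lra]).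
    assert (0 < exp x0 * r x0 * M x0).
    { apply Rmult_lt_0_compat; [apply Rmult_lt_0_compat; [apply exp_pos|lra]|lra]. }
    cut (0 <= (kappa (r x0) (W x0) (V x0) (N x0) - 1) * (exp x0 * r x0 * M x0)).
    { intros Hc. destruct (Rle_or_lt 1 (kappa (r x0) (W x0) (V x0) (N x0))); auto. nra. }
    apply H.
    + intros y Hy. destruct (Hpt y Hy) as [Hr1 [HN1 [D1 [D2 [D3 [D4 D5]]]]]].
      apply deriv_Phi; auto; lra.
    + intros y Hy. destruct (Hpt y Hy) as [Hr1 [HN1 _]].
      assert (0 < M y) by (unfold M; apply Rmult_lt_0_compat; [apply exp_pos|lra]).
      unfold Rdiv. apply Rmult_le_pos; [|left; apply Rinv_0_lt_compat; lra].
      apply Rmult_le_pos; [|apply pow2_ge_0].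
      apply Rmult_le_pos; [apply Rmult_le_pos; [lra|left; apply exp_pos]|lra].
    + apply (L_ext_loc (fun y => (kappa (r y) (W y) (V y) (N y) - 1) * (exp y * exp y * (r y / exp y) * M y)) _ x0).
      { intros y Hy. field. apply Rgt_not_eq, exp_pos. }
      eapply L_eq; [lim_tac | ring].
  - assert (H := nonneg_of_mono
      (fun t => (2 - N t - kappa (r t) (W t) (V t) (N t)) * (exp (2 * t) * M t / r t))
      (fun y => 3 * (1 - N y) ^ 2 * (exp (2 * y) * M y / r y)) x0).
    destruct (Hpt x0 ltac:(lra)) as [Hr0 [HN0 _]].
    assert (0 < M x0) by (unfold M; apply Rmult_lt_0_compat; [apply exp_pos|lra]).
    assert (0 < exp (2 * x0) * M x0 / r x0).
    { unfold Rdiv. apply Rmult_lt_0_compat; [apply Rmult_lt_0_compat; [apply exp_pos|lra]|].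
      apply Rinv_0_lt_compat; lra. }
    cut (0 <= (2 - N x0 - kappa (r x0) (W x0) (V x0) (N x0)) * (exp (2 * x0) * M x0 / r x0)).
    { intros Hc. destruct (Rle_or_lt (kappa (r x0) (W x0) (V x0) (N x0)) (2 - N x0)); auto. nra. }
    apply H.
    + intros y Hy. destruct (Hpt y Hy) as [Hr1 [HN1 [D1 [D2 [D3 [D4 D5]]]]]].
      apply deriv_Psi; auto; lra.
    + intros y Hy. destruct (Hpt y Hy) as [Hr1 [HN1 _]].
      assert (0 < M y) by (unfold M; apply Rmult_lt_0_compat; [apply exp_pos|lra]).
      apply Rmult_le_pos; [apply Rmult_le_pos; [lra|apply pow2_ge_0]|].
      unfold Rdiv. apply Rmult_le_pos; [|left; apply Rinv_0_lt_compat; lra].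
      apply Rmult_le_pos; [left; apply exp_pos|lra].
    + apply (L_ext_loc (fun y => (2 - N y - kappa (r y) (W y) (V y) (N y)) * (exp y * M y * / (r y / exp y))) _ x0).
      { intros y Hy. rewrite exp2. field; repeat split; try (apply Rgt_not_eq, exp_pos); auto. }
      eapply L_eq; [lim_tac | field].
Qed.
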